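(* For each $n$ let $\mathcal C_n\subset S_n$ be a conjugacy class consisting of odd permutations with $\mathrm{supp}(\mathcal C_n)\ge 2$, and set $t_n=\frac n2\log n$. Then for every $\epsilon\in(0,1)$, $$\lim_{n\to\infty}d_2\big(h_{\mathcal C_n,(1-\epsilon)t_n},u_n\big)=\infty,$$ where $u_n$ is the uniform measure on $S_n$.
   Context: For a conjugacy class $\mathcal C$ of $S_n$, $q_{\mathcal C}$ is the uniform probability measure on $\mathcal C$ and $\mathrm{supp}(\mathcal C)$ is the number of points of $\{1,\dots,n\}$ not fixed by an element of $\mathcal C$. $h_{\mathcal C,t}=h_{q_{\mathcal C},t}=e^{-t}\sum_{k\ge0}\frac{t^k}{k!}q_{\mathcal C}^{(k)}$, with $q^{(k)}$ the $k$-fold convolution power. $d_2(p,u)=\big(|G|\sum_{x\in G}|p(x)-u(x)|^2\big)^{1/2}$. *)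

(* Defs.v *)
From Stdlib Require Import Reals ClassicalEpsilon.
From mathcomp Require Import all_boot all_fingroup.

Set Implicit Arguments. Unset Strict Implicit. Unset Printing Implicit Defensive.

Local Open Scope R_scope.

Definition Rsum (T : finType) (F : T -> R) : R := \big[Rplus/R0]_(x : T) F x.

Section Measures.
Variable n : nat.
Notation G := {perm 'I_n}.

Definition unif_on (C : {set G}) (x : G) : R :=
  if x \in C then / INR #|C| else 0.

Definition unifG (x : G) : R := / INR #|G|.

Definition conv (p q : G -> R) (x : G) : R :=
  Rsum (fun y : G => p y * q ((y^-1)%g * x)%g).

Fixpoint convpow (q : G -> R) (k : nat) : G -> R :=
  match k with
  | O => fun x => if x == 1%g then 1 else 0
  | S k' => conv (convpow q k') q
  end.

Definition series_value (f : nat -> R) : R :=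
  epsilon (inhabits 0) (fun l => infinite_sum f l).

Definition heat (q : G -> R) (t : R) (x : G) : R :=
  series_value (fun k => exp (- t) * (t ^ k / INR (Factorial.fact k)) * convpow q k x).

Definition dist2 (p u : G -> R) : R :=
  sqrt (INR #|G| * Rsum (fun x : G => Rsqr (Rabs (p x - u x)))).

End Measures.

Definition supp_perm (n : nat) (s : {perm 'I_n}) : nat :=
  #|[set i : 'I_n | s i != i]|.

(* Main.v *)
Require Import Defs.
From Stdlib Require Import Reals ClassicalEpsilon Lra.
From HB Require Import structures.
From mathcomp Require Import all_boot all_fingroup.

Local Open Scope R_scope.

Lemma Rplus_assoc' : associative Rplus.
Proof. by move=> x y z; rewrite Rplus_assoc. Qed.
Lemma Rplus_comm' : commutative Rplus.
Proof. by move=> x y; rewrite Rplus_comm. Qed.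
Lemma Rplus_0_l' : left_id R0 Rplus.
Proof. by move=> x; rewrite Rplus_0_l. Qed.

HB.instance Definition _ := Monoid.isComLaw.Build R R0 Rplus Rplus_assoc' Rplus_comm' Rplus_0_l'.

Lemma Rsum_ge0 (T : finType) (F : T -> R) : (forall x, 0 <= F x) -> 0 <= Rsum F.
Proof.
move=> H; rewrite /Rsum; apply: (big_ind (fun a => 0 <= a)) => //; first lra.
move=> a b Ha Hb; lra.
Qed.

Lemma Rsum_le (T : finType) (F F' : T -> R) : (forall x, F x <= F' x) -> Rsum F <= Rsum F'.
Proof.
move=> H; rewrite /Rsum; apply: (big_ind2 (fun a b => a <= b)) => //; first lra.
move=> a b c d Ha Hb; lra.
Qed.

Lemma Rsum_const (T : finType) (c : R) : Rsum (fun _ : T => c) = INR #|T| * c.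
Proof.
rewrite -sum1_card /Rsum.
apply: (big_ind2 (fun (a : R) (b : nat) => a = INR b * c)) => //=.
- lra.
- move=> a b a' b' -> ->; rewrite plus_INR; lra.
- move=> _ _; lra.
Qed.

Lemma Rsum_ge_term (T : finType) (F : T -> R) (x0 : T) :
  (forall x, 0 <= F x) -> F x0 <= Rsum F.
Proof.
move=> H; rewrite /Rsum (bigD1 x0) //=.
have : 0 <= \big[Rplus/R0]_(i | i != x0) F i.
  apply: (big_ind (fun a => 0 <= a)) => //; first lra.
  move=> a b Ha Hb; lra.
lra.
Qed.

Lemma convpow_bound n (q : {perm 'I_n} -> R) (Hq : forall x, 0 <= q x <= 1) k x :
  0 <= convpow q k x <= INR #|{perm 'I_n}| ^ k.
Proof.
elim: k x => [|k IH] x /=.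
  case: (x == 1%g); lra.
rewrite /conv; split.
  apply: Rsum_ge0 => y; apply: Rmult_le_pos; [apply IH | apply Hq].
apply: Rle_trans (@Rsum_le _ _ (fun _ => INR #|{perm 'I_n}| ^ k) _) _.
  move=> y; have := IH y; have := Hq ((y^-1) * x)%g => [[? ?] [? ?]].
  rewrite -[X in _ <= X]Rmult_1_r; apply: Rmult_le_compat => //.
by rewrite Rsum_const; apply: Rle_refl.
Qed.

Lemma unif_on_bound n (C : {set {perm 'I_n}}) x : 0 <= unif_on C x <= 1.
Proof.
rewrite /unif_on; case: ifP => Hx; last lra.
have H1 : 1 <= INR #|C|.
  have : (1 <= #|C|)%N by apply/card_gt0P; exists x.
  by move/leP/le_INR.
split; first by left; apply: Rinv_0_lt_compat; lra.
rewrite -Rinv_1; apply: Rinv_le_contravar; lra.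
Qed.

Lemma series_le_limit (f : nat -> R) l k :
  (forall i, 0 <= f i) -> infinite_sum f l -> f k <= l.
Proof.
move=> Hf Hl.
have Hg : Un_growing (sum_f_R0 f) by move=> m /=; have := Hf m.+1; lra.
have Hl' : Un_cv (sum_f_R0 f) l := Hl.
have := @growing_ineq _ _ Hg Hl' k; apply: Rle_trans.
case: k => [|k] /=; first lra.
have := cond_pos_sum f k Hf; lra.
Qed.

Lemma sum_scal (g : nat -> R) c m : sum_f_R0 (fun i => c * g i) m = c * sum_f_R0 g m.
Proof. elim: m => [|m IH] /=; [lra | rewrite IH; lra]. Qed.

Lemma CV_cmul c (s : nat -> R) l : Un_cv s l -> Un_cv (fun m => c * s m) (c * l).
Proof.
move=> H; apply: CV_mult => // eps He; exists 0%N => m _.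
rewrite /R_dist; have -> : c - c = 0 by ring.
rewrite Rabs_R0; lra.
Qed.

Lemma heat_one_lb n (q : {perm 'I_n} -> R) (Hq : forall x, 0 <= q x <= 1) t :
  0 <= t -> exp (- t) <= heat q t 1%g.
Proof.
move=> Ht.
set f := fun k => exp (- t) * (t ^ k / INR (Factorial.fact k)) * convpow q k 1%g.
have Hf : forall k, 0 <= f k.
  move=> k; rewrite /f; apply: Rmult_le_pos; last by apply convpow_bound.
  apply: Rmult_le_pos; first by left; apply exp_pos.
  apply: Rmult_le_pos; first by apply pow_le.
  by left; apply: Rinv_0_lt_compat; apply: lt_0_INR; apply: Factorial.lt_O_fact.
set y := t * INR #|{perm 'I_n}|.
have [l Hl] : {l | Un_cv (sum_f_R0 f) l}.
  apply: (Rseries_CV_comp f (fun k => exp (- t) * (/ INR (Factorial.fact k) * y ^ k))).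
    move=> k; split => //; rewrite /f /y Rpow_mult_distr.
    have := @convpow_bound _ _ Hq k 1%g => -[_ Hb].
    have Hp : 0 <= exp (-t) * (t ^ k / INR (Factorial.fact k)).
      apply: Rmult_le_pos; first by left; apply exp_pos.
      apply: Rmult_le_pos; first by apply pow_le.
      by left; apply: Rinv_0_lt_compat; apply: lt_0_INR; apply: Factorial.lt_O_fact.
    apply: Rle_trans (Rmult_le_compat_l _ _ _ Hp Hb) _.
    rewrite /Rdiv; lra.
  exists (exp (- t) * exp y).
  have := proj2_sig (exist_exp y); rewrite /exp_in -/(exp y) => Hy.
  have Hc := @CV_cmul (exp (- t)) _ _ Hy.
  move=> eps He; case: (Hc eps He) => N HN; exists N => m Hm.
  by rewrite sum_scal; apply: HN.
have Hs : infinite_sum f (series_value f) by apply: epsilon_spec; exists l.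
have := @series_le_limit _ _ 0%N Hf Hs.
rewrite /heat -/f /f /= eqxx /Rdiv Rinv_1; lra.
Qed.

Lemma ln_le' x y : 0 < x -> x <= y -> ln x <= ln y.
Proof. move=> Hx [Hxy|->]; [left; apply: ln_increasing => // | right] => //. Qed.

Lemma exp_le' x y : x <= y -> exp x <= exp y.
Proof. move=> [Hxy|->]; [left; apply: exp_increasing | right] => //. Qed.

Lemma fact_eq n : n`! = Factorial.fact n.
Proof. elim: n => [|n IH] //=; by rewrite factS IH. Qed.

Lemma card_G n : INR #|{perm 'I_n}| = INR (Factorial.fact n).
Proof. by rewrite card_Sn fact_eq. Qed.

Lemma ln_fact_lb n : (1 <= n)%N ->
  INR n * ln (INR n) - INR n <= ln (INR (Factorial.fact n)).
Proof.
move=> Hn.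
have Hn0 : 0 < INR n by apply: lt_0_INR; apply/ltP.
have Hf : 0 < INR (Factorial.fact n) by apply: lt_0_INR; apply: Factorial.lt_O_fact.
have Hy := proj2_sig (exist_exp (INR n)); rewrite /exp_in -/(exp (INR n)) in Hy.
have Hpos : forall i, 0 <= / INR (Factorial.fact i) * INR n ^ i.
  move=> i; apply: Rmult_le_pos; last by apply: pow_le; lra.
  by left; apply: Rinv_0_lt_compat; apply: lt_0_INR; apply: Factorial.lt_O_fact.
have := @series_le_limit _ _ n Hpos Hy => H.
have H2 : INR n ^ n <= exp (INR n) * INR (Factorial.fact n).
  have -> : INR n ^ n = (/ INR (Factorial.fact n) * INR n ^ n) * INR (Factorial.fact n).
    field; lra.
  by apply: Rmult_le_compat_r; lra.
have Hp : 0 < INR n ^ n by apply: pow_lt.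
have := @ln_le' _ _ Hp H2.
rewrite ln_mult ?ln_exp ?ln_pow //; last by apply exp_pos.
lra.
Qed.

Theorem theorem5p2
  (C : forall n : nat, {set {perm 'I_n}})
  (HC : forall n : nat, (2 <= n)%N ->
     [/\ C n \in classes [set: {perm 'I_n}],
         (forall s, s \in C n -> odd_perm s)
       & (forall s, s \in C n -> (2 <= supp_perm s)%N)])
  (eps : R) (Heps : 0 < eps < 1) :
  cv_infty (fun n : nat =>
     dist2 (heat (unif_on (C n)) ((1 - eps) * (INR n / 2 * ln (INR n))))
        (@unifG n)).
Proof.
move=> M.
set A := Rmax 0 M + 1.
have HA : 0 < A by have := Rmax_l 0 M; rewrite /A; lra.
have HAM : M < A by have := Rmax_r 0 M; rewrite /A; lra.
have [n0 Hn0] := INR_unbounded (Rmax (exp (2 / eps)) ((A + 1) ^ 2)).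
exists n0 => n Hn.
have Hnn0 : INR n0 <= INR n by apply: le_INR.
have H1 := Rmax_l (exp (2 / eps)) ((A + 1) ^ 2).
have H2 := Rmax_r (exp (2 / eps)) ((A + 1) ^ 2).
have He2 := exp_pos (2 / eps).
have Hnpos : 0 < INR n by lra.
have Hn1 : (1 <= n)%N.
  case: n Hn Hnn0 Hnpos => [|n] //= _ _; rewrite /=; lra.
have Hln : 2 / eps <= ln (INR n).
  rewrite -[X in X <= _]ln_exp; apply: ln_le'; lra.
have Hepsln : 2 <= eps * ln (INR n).
  have -> : 2 = eps * (2 / eps) by field; lra.
  apply: Rmult_le_compat_l; lra.
have Hln0 : 0 <= ln (INR n).
  have : 0 < 2 / eps by apply: Rdiv_lt_0_compat; lra.
  lra.
set t := (1 - eps) * (INR n / 2 * ln (INR n)).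
have Ht : 0 <= t.
  rewrite /t; apply: Rmult_le_pos; first lra.
  apply: Rmult_le_pos; lra.
set N := INR #|{perm 'I_n}|.
have HN : N = INR (Factorial.fact n) by rewrite /N card_G.
have HN1 : 1 <= N.
  rewrite HN; apply: (le_INR 1); apply: Factorial.lt_O_fact.
have Hlf := @ln_fact_lb _ Hn1; rewrite -HN in Hlf.
have Hkey : INR n <= ln N - 2 * t.
  have -> : ln N - 2 * t = (ln N - INR n * ln (INR n) + INR n) + INR n * (eps * ln (INR n) - 1).
    rewrite /t; field.
  have : INR n * 1 <= INR n * (eps * ln (INR n) - 1) by apply: Rmult_le_compat_l; lra.
  lra.
set e := exp (- t).
have He : 0 < e by apply: exp_pos.
have Hee : N * (e * e) = exp (ln N - 2 * t).
  have -> : ln N - 2 * t = ln N + (- t + - t) by ring.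
  rewrite exp_plus exp_plus exp_ln //; lra.
have Hbig : (A + 1) ^ 2 < N * (e * e).
  rewrite Hee.
  have := @exp_le' _ _ Hkey.
  have := exp_ineq1 (INR n) ltac:(lra).
  lra.
set s := sqrt N.
have Hs : s * s = N by apply: sqrt_sqrt; lra.
have Hs1 : 1 <= s by rewrite -sqrt_1; apply: sqrt_le_1_alt.
have Hse : A + 1 < s * e.
  have Hse0 : 0 < s * e by apply: Rmult_lt_0_compat; lra.
  rewrite -Hs in Hbig.
  nra.
have Hinv : / N <= / s.
  rewrite -Hs; apply: Rinv_le_contravar; nra.
have Hinvs : / s <= 1 by rewrite -Rinv_1; apply: Rinv_le_contravar; lra.
have Hinvs0 : 0 < / s by apply: Rinv_0_lt_compat; lra.
have Hb : / N <= e.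
  have : / s * (A + 1) < / s * (s * e) by apply: Rmult_lt_compat_l.
  rewrite -Rmult_assoc Rinv_l; last lra.
  nra.
have Hh := @heat_one_lb n (unif_on (C n)) (@unif_on_bound n (C n)) t Ht.
rewrite -/t -/e in Hh.
rewrite /dist2 -/N.
set S := Rsum _.
have HS : Rsqr (e - / N) <= S.
  apply: Rle_trans (@Rsum_ge_term _ _ 1%g _); last by move=> x; apply: Rle_0_sqr.
  rewrite -Rsqr_abs; have -> : @unifG n 1%g = / N by []. rewrite /Rsqr; apply: Rmult_le_compat; first [apply: Rplus_le_compat_r; exact: Hh | lra].
have Hsq : sqrt (Rsqr (s * (e - / N))) <= sqrt (N * S).
  apply: sqrt_le_1_alt; rewrite Rsqr_mult /Rsqr Hs.
  apply: Rmult_le_compat_l; first lra.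
  by apply: HS.
rewrite sqrt_Rsqr in Hsq; last by apply: Rmult_le_pos; lra.
have : s * (e - / N) = s * e - / s.
  rewrite -Hs Rinv_mult; field; lra.
lra.
Qed.
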